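(* Let $g:[0,1]\to\mathbb{R}$ be continuous with $g(0)=g(1)=0$ and $g(y)>0$ for all $y\in(0,1)$, and let $S$ be the solid obtained by rotating about the $y$-axis the region bounded by the $y$-axis and the curve $x^2=g(y)$, $y\in[0,1]$. Let $$\rho=\frac{\int_0^1 g(1-s^2)\,ds}{\int_0^1 g(s^2)\,ds}$$ be the turn-up number of $S$ with respect to the $y$-axis. Then $\rho=1$ if and only if $$\int_0^{\pi/4}\big[g(\cos^2 t)-g(\sin^2 t)\big]\cos\!\Big(\frac{\pi}{4}+t\Big)\,dt=0.$$
   Context: The turn-up number of a solid with respect to a vertical line is the ratio of the Torricelli drainage times $T=\frac1K\int_0^H A(h)h^{-1/2}\,dh$ (with $A(h)$ the horizontal cross-sectional area at height $h$ and the orifice at the lowest point) for the solid in the two positions obtained by turning it upside down while keeping that line vertical. For the solid $S$ above, with cross-sectional area $\pi g(h)$ at height $h$, these two times are proportional to $\int_0^1 g(s^2)\,ds$ and $\int_0^1 g(1-s^2)\,ds$, giving the displayed formula for $\rho$. *)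

(* Defs.v *)
From Stdlib Require Import Reals Lra.
From Coquelicot Require Import Coquelicot.
Open Scope R_scope.

Definition continuous_on_01 (g : R -> R) : Prop :=
  forall y, 0 <= y <= 1 ->
    forall eps, 0 < eps -> exists delta, 0 < delta /\
      forall z, 0 <= z <= 1 -> Rabs (z - y) < delta -> Rabs (g z - g y) < eps.

Definition turn_up_number (g : R -> R) : R :=
  RInt (fun s => g (1 - s ^ 2)) 0 1 / RInt (fun s => g (s ^ 2)) 0 1.

(* Main.v *)
Require Import Defs.
From Stdlib Require Import Reals Lra.
From Coquelicot Require Import Coquelicot.
Open Scope R_scope.

Definition clamp (x : R) := Rmax 0 (Rmin 1 x).

Lemma clamp_in x : 0 <= clamp x <= 1.
Proof. unfold clamp, Rmax, Rmin; repeat destruct Rle_dec; lra. Qed.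

Lemma clamp_id x : 0 <= x <= 1 -> clamp x = x.
Proof. unfold clamp, Rmax, Rmin; repeat destruct Rle_dec; lra. Qed.

Lemma clamp_lip x z : Rabs (clamp z - clamp x) <= Rabs (z - x).
Proof. unfold clamp, Rmax, Rmin; repeat destruct Rle_dec; split_Rabs; lra. Qed.

Lemma gt_cont (g : R -> R) : continuous_on_01 g -> continuity (fun x => g (clamp x)).
Proof.
  intros hc x. unfold continuity_pt, continue_in, limit1_in, limit_in.
  intros eps He. destruct (hc (clamp x) (clamp_in x) eps He) as [d [Hd H]].
  exists d; split; auto. intros z [_ Hz]. simpl in *. unfold R_dist in *.
  apply H. apply clamp_in. eapply Rle_lt_trans; [apply clamp_lip|exact Hz].
Qed.

Lemma cont_ok (F : R -> R) x : continuity F -> continuous F x.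
Proof. intros H. apply continuity_pt_filterlim. apply H. Qed.

Lemma sq01_sin t : 0 <= sin t ^ 2 <= 1.
Proof. pose proof (sin2_cos2 t). unfold Rsqr in *. nra. Qed.
Lemma sq01_cos t : 0 <= cos t ^ 2 <= 1.
Proof. pose proof (sin2_cos2 t). unfold Rsqr in *. nra. Qed.

Lemma cont_sq f : continuity f -> continuity (fun x => f x ^ 2).
Proof. intros H. apply (continuity_comp f (fun y => y^2)); auto.
  apply derivable_continuous, derivable_pow. Qed.

Lemma final_alg (a b I : R) : 0 < a -> b - a = sqrt 2 * I -> (b / a = 1 <-> I = 0).
Proof.
  intros Ha Hba. assert (s2 : 0 < sqrt 2) by (apply sqrt_lt_R0; lra).
  split.
  - intro Hq. assert (E : b = b / a * a) by (field; lra). rewrite Hq in E.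
    assert (E2 : sqrt 2 * I = 0) by lra.
    destruct (Rmult_integral _ _ E2); lra.
  - intro Hz. rewrite Hz in Hba. assert (b = a) by lra. subst. field. lra.
Qed.

Theorem theorem4 (g : R -> R)
  (hcont : continuous_on_01 g)
  (h0 : g 0 = 0) (h1 : g 1 = 0)
  (hpos : forall y, 0 < y < 1 -> 0 < g y) :
  turn_up_number g = 1 <->
  RInt (fun t => (g (cos t ^ 2) - g (sin t ^ 2)) * cos (PI / 4 + t)) 0 (PI / 4) = 0.
Proof.
  set (gg := fun x => g (clamp x)).
  assert (Hg : continuity gg) by (apply gt_cont; auto).
  assert (ggE : forall x, 0 <= x <= 1 -> gg x = g x) by (intros; unfold gg; rewrite clamp_id; auto).
  assert (cS : continuity (fun s => gg (sin s ^ 2))).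
  { apply (continuity_comp (fun s => sin s ^ 2) gg); auto.
    apply cont_sq, continuity_sin. }
  assert (cC : continuity (fun s => gg (cos s ^ 2))).
  { apply (continuity_comp (fun s => cos s ^ 2) gg); auto.
    apply cont_sq, continuity_cos. }
  set (K := fun y => cos y * (gg (cos y ^ 2) - gg (sin y ^ 2))).
  assert (cK : continuity K).
  { apply continuity_mult; [apply continuity_cos|]. apply continuity_minus; auto. }
  assert (exK : forall a b, ex_RInt K a b).
  { intros; apply (@ex_RInt_continuous R_CompleteNormedModule); intros; apply cont_ok; auto. }
  assert (dsin : forall x, is_derive sin x (cos x) /\ continuous cos x).
  { intros. split. apply is_derive_sin. apply cont_ok, continuity_cos. }
  assert (HA : RInt (fun s => g (s ^ 2)) 0 1 = RInt (fun y => cos y * gg (sin y ^ 2)) 0 (PI/2)).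
  { transitivity (RInt (fun s => gg (s^2)) 0 1).
    { apply RInt_ext. intros x Hx. rewrite Rmin_left in Hx by lra. rewrite Rmax_right in Hx by lra.
      rewrite ggE; auto. nra. }
    pose proof (@RInt_comp R_CompleteNormedModule (fun s => gg (s^2)) sin cos 0 (PI/2)) as E.
    rewrite sin_0, sin_PI2 in E. rewrite <- E.
    - apply RInt_ext. intros; reflexivity.
    - intros. apply cont_ok. apply (continuity_comp (fun s => s ^ 2) gg); auto.
      apply cont_sq, derivable_continuous, derivable_id.
    - intros. apply dsin. }
  assert (HB : RInt (fun s => g (1 - s ^ 2)) 0 1 = RInt (fun y => cos y * gg (cos y ^ 2)) 0 (PI/2)).
  { transitivity (RInt (fun s => gg (1 - s^2)) 0 1).
    { apply RInt_ext. intros x Hx. rewrite Rmin_left in Hx by lra. rewrite Rmax_right in Hx by lra.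
      rewrite ggE; auto. nra. }
    pose proof (@RInt_comp R_CompleteNormedModule (fun s => gg (1 - s^2)) sin cos 0 (PI/2)) as E.
    rewrite sin_0, sin_PI2 in E. rewrite <- E.
    - apply RInt_ext. intros x _. pose proof (sin2_cos2 x). unfold Rsqr in *.
      unfold scal; simpl; unfold mult; simpl. do 2 f_equal. nra.
    - intros. apply cont_ok. apply (continuity_comp (fun s => 1 - s ^ 2) gg); auto.
      apply continuity_minus. apply continuity_const. intros ??; reflexivity.
      apply cont_sq, derivable_continuous, derivable_id.
    - intros. apply dsin. }
  set (H := fun t => (gg (cos t ^ 2) - gg (sin t ^ 2)) * cos (PI / 4 + t)).
  assert (cH : continuity H).
  { apply continuity_mult. apply continuity_minus; auto.
    apply (continuity_comp (fun t => PI/4 + t) cos). 2: apply continuity_cos.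
    apply continuity_plus. apply continuity_const. intros ??; reflexivity.
    apply derivable_continuous, derivable_id. }
  assert (exC : ex_RInt (fun y => cos y * gg (cos y ^ 2)) 0 (PI/2)).
  { apply (@ex_RInt_continuous R_CompleteNormedModule); intros; apply cont_ok.
    apply continuity_mult; auto. apply continuity_cos. }
  assert (exS : ex_RInt (fun y => cos y * gg (sin y ^ 2)) 0 (PI/2)).
  { apply (@ex_RInt_continuous R_CompleteNormedModule); intros; apply cont_ok.
    apply continuity_mult; auto. apply continuity_cos. }
  assert (HD : RInt (fun y => cos y * gg (cos y ^ 2)) 0 (PI/2) - RInt (fun y => cos y * gg (sin y ^ 2)) 0 (PI/2) = RInt K 0 (PI/2)).
  { pose proof (@RInt_minus R_CompleteNormedModule _ _ 0 (PI/2) exC exS) as E.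
    transitivity (RInt (fun x => minus (cos x * gg (cos x ^ 2)) (cos x * gg (sin x ^ 2))) 0 (PI/2)).
    { symmetry; exact E. }
    apply RInt_ext. intros. unfold K, minus, plus, opp; simpl. ring. }
  assert (HC : RInt K 0 (PI/2) = RInt K 0 (PI/4) + RInt K (PI/4) (PI/2)).
  { symmetry. apply (@RInt_Chasles R_CompleteNormedModule); apply exK. }
  assert (exL : ex_RInt (fun y => scal (-1) (K (-1 * y + PI/2))) 0 (PI/4)).
  { apply (@ex_RInt_comp_lin R_NormedModule). apply exK. }
  assert (HR : RInt K (PI/4) (PI/2) = - RInt (fun y => scal (-1) (K (-1 * y + PI/2))) 0 (PI/4)).
  { pose proof (@RInt_comp_lin R_CompleteNormedModule K (-1) (PI/2) 0 (PI/4) ltac:(apply exK)) as E.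
    replace (-1*0+PI/2) with (PI/2) in E by ring. replace (-1*(PI/4)+PI/2) with (PI/4) in E by field.
    transitivity (- RInt K (PI/2) (PI/4)).
    { rewrite <- (@opp_RInt_swap R_CompleteNormedModule) by apply exK. reflexivity. }
    f_equal. symmetry. exact E. }
  assert (exH : ex_RInt H 0 (PI/4)).
  { apply (@ex_RInt_continuous R_CompleteNormedModule); intros; apply cont_ok; auto. }
  assert (HM : RInt K 0 (PI/4) - RInt (fun y => scal (-1) (K (-1 * y + PI/2))) 0 (PI/4) = sqrt 2 * RInt H 0 (PI/4)).
  { pose proof (@RInt_minus R_CompleteNormedModule _ _ 0 (PI/4) (exK 0 (PI/4)) exL) as E.
    transitivity (RInt (fun x => minus (K x) (scal (-1) (K (-1 * x + PI/2)))) 0 (PI/4)).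
    { symmetry; exact E. }
    pose proof (@RInt_scal R_CompleteNormedModule H 0 (PI/4) (sqrt 2) exH) as E2.
    transitivity (scal (sqrt 2) (RInt H 0 (PI / 4))); [| reflexivity].
    rewrite <- E2. apply RInt_ext. intros x _.
    unfold K, H, minus, plus, opp, scal; simpl; unfold mult; simpl.
    replace (-1 * x + PI/2) with (PI/2 - x) by ring. rewrite cos_shift, sin_shift, cos_plus, cos_PI4, sin_PI4.
    assert (sqrt 2 <> 0). { pose proof (sqrt_lt_R0 2). lra. }
    field. auto. }
  assert (HI : RInt H 0 (PI/4) = RInt (fun t => (g (cos t ^ 2) - g (sin t ^ 2)) * cos (PI / 4 + t)) 0 (PI / 4)).
  { apply RInt_ext. intros. unfold H. rewrite !ggE; auto using sq01_sin, sq01_cos. }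
  assert (Apos : 0 < RInt (fun s => g (s ^ 2)) 0 1).
  { rewrite (RInt_ext (fun s => g (s ^ 2)) (fun s => gg (s ^ 2))).
    - apply RInt_gt_0. lra.
      + intros x Hx. rewrite ggE by nra. apply hpos. nra.
      + intros. apply cont_ok. apply (continuity_comp (fun s => s ^ 2) gg); auto.
        apply cont_sq, derivable_continuous, derivable_id.
    - intros x Hx. rewrite Rmin_left in Hx by lra. rewrite Rmax_right in Hx by lra.
      rewrite ggE; auto. nra. }
  unfold turn_up_number. rewrite HB, <- HI. rewrite HA in Apos |- *.
  set (a := RInt (fun y => cos y * gg (sin y ^ 2)) 0 (PI/2)) in *.
  set (b := RInt (fun y => cos y * gg (cos y ^ 2)) 0 (PI/2)) in *.
  apply final_alg; auto. lra.
Qed.
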